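(* Let $\phi\colon(T,X)\to(T,Y)$ be a proximal extension of compact dynamics such that $X$ has a dense set of a.p. points. Then $(T,X)$ is an M-dynamic if and only if $(T,Y)$ is an M-dynamic.
   Context: $T$ is a group or monoid acting continuously. An extension is a continuous equivariant surjection; it is proximal if for every $(x,x')$ with $\phi x=\phi x'$ the orbit closure $\overline{T(x,x')}$ meets the diagonal $\Delta_X$. A point is a.p. if its return times to every neighborhood form a syndetic subset of $T$ (i.e. there is compact $K$ with $Kt\cap A\ne\emptyset$ for all $t$). A dynamic is topologically transitive if $\{t:V\cap tU\ne\emptyset\}\ne\emptyset$ for all nonempty open $U,V$; it is an M-dynamic if it is topologically transitive and has a dense set of a.p. points. *)

(* Defs.v *)
From HB Require Import structures.
From mathcomp Require Import all_boot all_order all_algebra.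
From mathcomp Require Import all_classical all_reals all_analysis.
Set Implicit Arguments. Unset Strict Implicit. Unset Printing Implicit Defensive.
Local Open Scope classical_set_scope.

Definition is_monoid {T : Type} (mul : T -> T -> T) (e : T) :=
  (forall s t u, mul s (mul t u) = mul (mul s t) u) /\
  (forall t, mul e t = t) /\ (forall t, mul t e = t).

Definition topological_monoid {T : topologicalType} (mul : T -> T -> T) (e : T) :=
  is_monoid mul e /\ continuous (fun p : T * T => mul p.1 p.2).

Definition cont_action {T X : topologicalType} (mul : T -> T -> T) (e : T)
    (act : T -> X -> X) :=
  (forall x, act e x = x) /\
  (forall s t x, act (mul s t) x = act s (act t x)) /\
  continuous (fun p : T * X => act p.1 p.2).

Definition compact_space (X : topologicalType) :=
  compact [set: X] /\ hausdorff_space X.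

Definition syndetic {T : topologicalType} (mul : T -> T -> T) (A : set T) :=
  exists K : set T, compact K /\ forall t, exists2 k, K k & A (mul k t).

Definition return_times {T X : Type} (act : T -> X -> X) (x : X) (U : set X) :=
  [set t | U (act t x)].

Definition ap_point {T X : topologicalType} (mul : T -> T -> T)
    (act : T -> X -> X) (x : X) :=
  forall U, nbhs x U -> syndetic mul (return_times act x U).

Definition top_transitive {T X : topologicalType} (act : T -> X -> X) :=
  forall U V : set X, open U -> open V -> U !=set0 -> V !=set0 ->
    exists t, (V `&` (act t @` U)) !=set0.

Definition M_dynamic {T X : topologicalType} (mul : T -> T -> T)
    (act : T -> X -> X) :=
  top_transitive act /\ dense [set x | ap_point mul act x].

Definition extension {T X Y : topologicalType} (actX : T -> X -> X)
    (actY : T -> Y -> Y) (phi : X -> Y) :=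
  continuous phi /\ (forall y, exists x, phi x = y) /\
  (forall t x, phi (actX t x) = actY t (phi x)).

Definition proximal_extension {T X Y : topologicalType} (actX : T -> X -> X)
    (actY : T -> Y -> Y) (phi : X -> Y) :=
  extension actX actY phi /\
  forall x x' : X, phi x = phi x' ->
    exists z : X, closure [set (actX t x, actX t x') | t in [set: T]] (z, z).

(* Main.v *)
Require Import Defs.
From mathcomp Require Import all_boot all_order all_algebra.
From mathcomp Require Import all_classical all_reals all_analysis.
Local Open Scope classical_set_scope.

Lemma apL (T X : topologicalType) (mul : T -> T -> T) (act : T -> X -> X) (x w : X) :
  (forall s t x, act (mul s t) x = act s (act t x)) ->
  continuous (fun p : T * X => act p.1 p.2) ->
  compact_space X -> ap_point mul act x ->
  (forall B, nbhs w B -> exists t, B (act t x)) ->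
  forall N, nbhs x N -> exists s, N (act s w).
Proof.
move=> actM actc [cX hX] apx wcl N Nx.
apply: contrapT => /forallNP H.
have [N2 N2x N2N] : exists2 N2, nbhs x N2 & closure N2 `<=` N.
  have := @compact_regular X x setT hX cX filterT N Nx.
  rewrite /nbhs /=. move=> HH. apply: HH; exact: _.
have [K [cK HK]] := apx _ N2x.
have cov : \forall p \near w, K `<=` (fun k : T => ~ closure N2 (act k p)).
  apply: (proj1 (compact_near_coveringP K) cK X (nbhs w)
   (fun p k => ~ closure N2 (act k p))).
  move=> k Kk.
  have ko : open (~` closure N2) by apply: closed_openC; exact: closed_closure.
  have : nbhs (act k w) (~` closure N2).
    apply: open_nbhs_nbhs; split => //.
    by move=> /N2N; apply: H.
  move=> /(actc (k, w)) => /= hh.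
  exact: hh.
have [t Bt] := wcl _ cov.
have [k Kk Ak] := HK t.
apply: (Bt k Kk).
rewrite /return_times /= actM in Ak.
exact: subset_closure.
Qed.

Lemma act_cont1 (T X : topologicalType) (act : T -> X -> X) (s : T) :
  continuous (fun p : T * X => act p.1 p.2) -> continuous (act s).
Proof.
move=> actc p A hA.
have := actc (s, p) A hA.
move=> [[P Q] /= [Ps Qp] PQ].
apply: filterS Qp => q Qq.
by apply: (PQ (s, q)); split => //; exact: nbhs_singleton Ps.
Qed.

Lemma clo1 (T X : topologicalType) (act : T -> X -> X) (x x' z : X) :
  closure [set (act t x, act t x') | t in [set: T]] (z, z) ->
  forall B, nbhs z B -> exists t, B (act t x) /\ B (act t x').
Proof.
move=> hc B Bz.
have hB : nbhs (z, z) (B `*` B) by exists (B, B).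
have [[a b] [[t _ [<- <-]] [/= h1 h2]]] := hc _ hB.
by exists t.
Qed.

Lemma claim1 (T X : topologicalType) (mul : T -> T -> T) (act : T -> X -> X) (x x' z : X) :
  (forall s t x, act (mul s t) x = act s (act t x)) ->
  continuous (fun p : T * X => act p.1 p.2) ->
  compact_space X -> ap_point mul act x ->
  closure [set (act t x, act t x') | t in [set: T]] (z, z) ->
  forall N, nbhs x N -> exists t, N (act t x').
Proof.
move=> actM actc cX apx hc N Nx.
have Nix : nbhs x N° by rewrite nbhsE /=; exists N°; [split; [exact: open_interior | exact: nbhs_singleton (nbhs_interior Nx)] | by []].
have [s Ns] := @apL _ _ mul act x z actM actc cX apx (fun B Bz => let: ex_intro t (conj h _) := @clo1 _ _ act x x' z hc B Bz in ex_intro _ t h) _ Nix.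
have hB : nbhs z (act s @^-1` N°).
  apply: (@act_cont1 _ _ act s actc z).
  by apply: open_nbhs_nbhs; split => //; exact: open_interior.
have [t [_ ht]] := @clo1 _ _ act x x' z hc _ hB.
exists (mul s t); rewrite actM.
exact: interior_subset.
Qed.

Lemma openG (T X : topologicalType) (act : T -> X -> X) (U : set X) :
  continuous (fun p : T * X => act p.1 p.2) -> open U ->
  open [set w | exists t, U (act t w)].
Proof.
move=> actc oU; rewrite openE => w [t Ut].
rewrite /interior.
have : nbhs (act t w) U by apply: open_nbhs_nbhs; split.
move=> /(@act_cont1 _ _ act t actc w) h.
apply: (@filterS _ (nbhs w) _ (act t @^-1` U)) => // q qU; by exists t.
Qed.

Lemma O_lemma (T X Y : topologicalType) (mul : T -> T -> T) (e : T)
  (actX : T -> X -> X) (actY : T -> Y -> Y) (phi : X -> Y) (U : set X) :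
  cont_action mul e actX ->
  compact_space X -> compact_space Y ->
  proximal_extension actX actY phi ->
  dense [set x | ap_point mul actX x] ->
  open U -> U !=set0 ->
  exists O : set Y, [/\ open O, O !=set0 &
    forall w, O (phi w) -> exists t, U (actX t w)].
Proof.
move=> [_ [actM actc]] cX [cY hY] [[phic [phis phie]] prox] dX oU U0.
have [x [Ux apx]] := dX U U0 oU.
pose G := [set w | exists t, U (actX t w)].
have oG : open G by exact: openG.
have cC : compact (phi @` (~` G)).
  apply: continuous_compact; first exact: continuous_subspaceT.
  apply: (subclosed_compact _ (proj1 cX)) => //.
  exact: open_closedC.
have clC : closed (phi @` (~` G)) by exact: compact_closed.
exists (~` (phi @` (~` G))); split.
- exact: closed_openC.
- exists (phi x) => -[w nGw ew].
  have [z hz] := prox x w (esym ew).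
  apply: nGw.
  have := @claim1 _ _ mul actX x w z actM actc cX apx hz U.
  apply; apply: open_nbhs_nbhs; split => //.
- move=> w Ow; apply: contrapT => nGw; apply: Ow.
  by exists w.
Qed.

Theorem lemma3p8 (T : topologicalType) (mul : T -> T -> T) (e : T)
  (X Y : topologicalType) (actX : T -> X -> X) (actY : T -> Y -> Y)
  (phi : X -> Y) :
  topological_monoid mul e ->
  cont_action mul e actX -> cont_action mul e actY ->
  compact_space X -> compact_space Y ->
  proximal_extension actX actY phi ->
  dense [set x | ap_point mul actX x] ->
  (M_dynamic mul actX <-> M_dynamic mul actY).
Proof.
move=> _ caX caY cX cY pe dX.
have [[phic [phis phie]] prox] := pe.
have [_ [actM actc]] := caX.
have [_ [actYM actYc]] := caY.
split.
- move=> [trX _]; split.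
  + move=> U V oU oV [y Uy] [y' Vy].
    have [x ex] := phis y; have [x' ex'] := phis y'.
    have oU' : open (phi @^-1` U) by apply: open_comp => // p _; exact: phic.
    have oV' : open (phi @^-1` V) by apply: open_comp => // p _; exact: phic.
    have U0 : (phi @^-1` U) !=set0 by exists x; rewrite /= ex.
    have V0 : (phi @^-1` V) !=set0 by exists x'; rewrite /= ex'.
    have [t [p [Vp [q Uq ep]]]] := trX _ _ oU' oV' U0 V0.
    exists t; exists (phi p); split => //.
    by exists (phi q) => //; rewrite -ep phie.
  + move=> O O0 oO.
    have [y Oy] := O0; have [x ex] := phis y.
    have oO' : open (phi @^-1` O) by apply: open_comp => // p _; exact: phic.
    have O0' : (phi @^-1` O) !=set0 by exists x; rewrite /= ex.
    have [z [Oz apz]] := dX _ O0' oO'.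
    exists (phi z); split => // N Nz.
    have Nz' : nbhs z (phi @^-1` N) by exact: phic.
    have [K [cK HK]] := apz _ Nz'.
    exists K; split => // t.
    have [k Kk hk] := HK t.
    by exists k => //; rewrite /return_times /= -phie.
- move=> [trY _]; split => // U V oU oV U0 V0.
  have [OU [oOU OU0 hOU]] := @O_lemma _ _ _ mul e actX actY phi U caX cX cY pe dX oU U0.
  have [OV [oOV OV0 hOV]] := @O_lemma _ _ _ mul e actX actY phi V caX cX cY pe dX oV V0.
  have [t [p0 [OVp [y OUy ep]]]] := trY _ _ oOU oOV OU0 OV0.
  pose W := phi @^-1` (OU `&` (actY t @^-1` OV)).
  have oW : open W.
    apply: open_comp => [p _|]; first exact: phic.
    apply: openI => //; apply: open_comp => // p _.
    exact: (@act_cont1 _ _ actY t actYc).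
  have [x0 ex0] := phis y.
  have W0 : W !=set0 by exists x0; rewrite /W /= ex0; split => //; rewrite ep.
  have [z [[OUz OVz] apz]] := dX _ W0 oW.
  have [r Ur] := hOU z OUz.
  have Wn : nbhs z W by apply: open_nbhs_nbhs; split => //; split.
  have [s Ws] := @apL _ _ mul actX z (actX r z) actM actc cX apz
     (fun B Bw => ex_intro _ r (nbhs_singleton Bw)) W Wn.
  have [_ OVs] := Ws.
  rewrite /= -phie in OVs.
  have [q Vq] := hOV _ OVs.
  exists (mul q (mul t s)); exists (actX q (actX t (actX s (actX r z)))); split => //.
  by exists (actX r z) => //; rewrite !actM.
Qed.
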